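(* Let $(X,\phi)$ be a flow on a compact metric space $(X,d)$. Then \begin{align*} \overline{\mathrm{mdim}}_M(\phi,X,d)&=\limsup_{\epsilon\to0}\liminf_{t\to\infty}\frac{\log r_t(\phi,X,d,\epsilon)}{t\log\frac1\epsilon},\\ \underline{\mathrm{mdim}}_M(\phi,X,d)&=\liminf_{\epsilon\to0}\liminf_{t\to\infty}\frac{\log r_t(\phi,X,d,\epsilon)}{t\log\frac1\epsilon}. \end{align*}
   Context: A flow: $\phi:X\times\mathbb{R}\to X$ continuous, $\phi_t(x)=\phi(x,t)$, $\phi_0=\mathrm{id}$, $\phi_{t+s}=\phi_t\circ\phi_s$. $d_t(x,y)=\max_{s\in[0,t]}d(\phi_sx,\phi_sy)$. $r_t(\phi,X,d,\epsilon)$ is the minimal cardinality of $E\subset X$ such that every $x\in X$ has $y\in E$ with $d_t(x,y)<\epsilon$; $r(\phi,X,d,\epsilon)=\limsup_{t\to\infty}\frac1t\log r_t(\phi,X,d,\epsilon)$; $\overline{\mathrm{mdim}}_M(\phi,X,d)=\limsup_{\epsilon\to0}\frac{r(\phi,X,d,\epsilon)}{\log(1/\epsilon)}$, $\underline{\mathrm{mdim}}_M(\phi,X,d)=\liminf_{\epsilon\to0}\frac{r(\phi,X,d,\epsilon)}{\log(1/\epsilon)}$. *)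

(* Defs.v *)
From HB Require Import structures.
From mathcomp Require Import all_boot all_order all_algebra.
From mathcomp Require Import all_classical all_reals all_analysis.
From Stdlib Require Import List.
Set Implicit Arguments. Unset Strict Implicit. Unset Printing Implicit Defensive.
Import Order.TTheory GRing.Theory Num.Theory.
Local Open Scope classical_set_scope.
Local Open Scope ring_scope.
Local Open Scope ereal_scope.

Section Defs.
Variables (R : realType) (X : Type).

Definition is_metric (d : X -> X -> R) : Prop :=
  (forall x y, (0 <= d x y)%R) /\
  (forall x y, d x y = 0%R <-> x = y) /\
  (forall x y, d x y = d y x) /\
  (forall x y z, (d x z <= d x y + d y z)%R).

Definition d_open (d : X -> X -> R) (U : set X) : Prop :=
  forall x, U x -> exists2 e : R, (0 < e)%R & forall y, (d x y < e)%R -> U y.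

Definition d_compact (d : X -> X -> R) : Prop :=
  forall (I : Type) (U : I -> set X),
    (forall i, d_open d (U i)) ->
    (forall x, exists i, U i x) ->
    exists s : list I, forall x, exists2 i, In i s & U i x.

(** phi : X x R -> X is a (continuous) flow; phi x t stands for phi_t(x). *)
Definition is_flow (d : X -> X -> R) (phi : X -> R -> X) : Prop :=
  (forall x t (e : R), (0 < e)%R -> exists2 del : R, (0 < del)%R &
     forall y s, (d x y < del)%R -> (`|s - t| < del)%R ->
       (d (phi x t) (phi y s) < e)%R) /\
  (forall x, phi x 0%R = x) /\
  (forall x t s, phi x (t + s)%R = phi (phi x s) t).

Definition dflow (d : X -> X -> R) (phi : X -> R -> X) (t : R) (x y : X)
  : \bar R :=
  ereal_sup [set ((d (phi x s) (phi y s))%:E) | s in `[0%R, t]%classic].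

(** r_t(phi,X,d,eps): minimal cardinality of a (t,eps)-spanning set
    (+oo if there is no finite one). *)
Definition spanning (d : X -> X -> R) (phi : X -> R -> X) (t eps : R)
  (E : list X) : Prop :=
  forall x, exists2 y, In y E & dflow d phi t x y < eps%:E.

Definition rt (d : X -> X -> R) (phi : X -> R -> X) (t eps : R) : \bar R :=
  ereal_inf [set (n%:R)%:E | n in
     [set n : nat | exists E : list X, length E = n /\ spanning d phi t eps E]].

End Defs.

Definition elog (R : realType) (x : \bar R) : \bar R :=
  match x with
  | r%:E => if r == 0%R then -oo else (ln r)%:E
  | +oo => +oo
  | -oo => -oo
  end.

Definition limsup_pinfty (R : realType) (f : R -> \bar R) : \bar R :=
  ereal_inf [set ereal_sup [set f t | t in [set t | (T <= t)%R]] | T in setT].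
Definition liminf_pinfty (R : realType) (f : R -> \bar R) : \bar R :=
  ereal_sup [set ereal_inf [set f t | t in [set t | (T <= t)%R]] | T in setT].
Definition limsup_0p (R : realType) (f : R -> \bar R) : \bar R :=
  ereal_inf [set ereal_sup [set f e | e in [set e | (0 < e < del)%R]]
            | del in [set del | (0 < del)%R]].
Definition liminf_0p (R : realType) (f : R -> \bar R) : \bar R :=
  ereal_sup [set ereal_inf [set f e | e in [set e | (0 < e < del)%R]]
            | del in [set del | (0 < del)%R]].

Definition rate (R : realType) (X : Type) (d : X -> X -> R) (phi : X -> R -> X)
  (eps : R) : \bar R :=
  limsup_pinfty (fun t => elog (rt d phi t eps) * (t^-1)%:E).

Definition upper_mdimM (R : realType) (X : Type) (d : X -> X -> R)
  (phi : X -> R -> X) : \bar R :=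
  limsup_0p (fun eps => rate d phi eps * ((ln (eps^-1))^-1)%:E).
Definition lower_mdimM (R : realType) (X : Type) (d : X -> X -> R)
  (phi : X -> R -> X) : \bar R :=
  liminf_0p (fun eps => rate d phi eps * ((ln (eps^-1))^-1)%:E).

(* Main.v *)
Require Import Defs.
From HB Require Import structures.
From mathcomp Require Import all_boot all_order all_algebra.
From mathcomp Require Import all_classical all_reals all_analysis.
From mathcomp Require Import lra ring.
From Stdlib Require Import List ClassicalEpsilon.
Import Order.TTheory GRing.Theory Num.Theory.
Local Open Scope classical_set_scope.
Local Open Scope ring_scope.
Local Open Scope ereal_scope.



Section Gen.
Variable R : realType.
Implicit Types h k : R -> \bar R.

Lemma sup_scale (T : Type) (A : set T) (h : T -> \bar R) (c : R) : (0 < c)%R ->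
  ereal_sup [set h x * c%:E | x in A] = ereal_sup [set h x | x in A] * c%:E.
Proof.
move=> c0; rewrite muleC -ereal_sup_pZl // image_comp; congr ereal_sup.
by apply: eq_imagel => x _ /=; rewrite muleC.
Qed.

Lemma inf_scale (T : Type) (A : set T) (h : T -> \bar R) (c : R) : (0 < c)%R ->
  ereal_inf [set h x * c%:E | x in A] = ereal_inf [set h x | x in A] * c%:E.
Proof.
move=> c0; rewrite muleC -ereal_inf_pZl // image_comp; congr ereal_inf.
by apply: eq_imagel => x _ /=; rewrite muleC.
Qed.

Lemma liminf_pinfty_scale h c : (0 < c)%R ->
  liminf_pinfty (fun t => h t * c%:E) = liminf_pinfty h * c%:E.
Proof.
move=> c0; rewrite /liminf_pinfty -sup_scale //; congr ereal_sup.
by apply: eq_imagel => T _; rewrite inf_scale.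
Qed.

Lemma limsup_0p_scale h c : (0 < c)%R ->
  limsup_0p (fun t => h t * c%:E) = limsup_0p h * c%:E.
Proof.
move=> c0; rewrite /limsup_0p -inf_scale //; congr ereal_inf.
by apply: eq_imagel => T _; rewrite sup_scale.
Qed.

Lemma liminf_0p_scale h c : (0 < c)%R ->
  liminf_0p (fun t => h t * c%:E) = liminf_0p h * c%:E.
Proof.
move=> c0; rewrite /liminf_0p -sup_scale //; congr ereal_sup.
by apply: eq_imagel => T _; rewrite inf_scale.
Qed.

Lemma limsup_0p_mono h k (del0 : R) : (0 < del0)%R ->
  (forall e, (0 < e < del0)%R -> h e <= k e) -> limsup_0p h <= limsup_0p k.
Proof.
move=> d0 hk; apply: le_ereal_inf_tmp => _ [del /= del0' <-].
have m0 : (0 < Num.min del del0)%R by rewrite lt_min del0' d0.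
apply: (@le_trans _ _ (ereal_sup [set h e | e in [set e | (0 < e < Num.min del del0)%R]])).
  by apply: ereal_inf_lbound; exists (Num.min del del0).
apply: ge_ereal_sup => _ [e /= /andP[e0 ed] <-].
move: ed; rewrite lt_min => /andP[ed1 ed2].
apply: (le_trans (hk e _)); first by rewrite e0 ed2.
by apply: ereal_sup_ubound; exists e => //=; rewrite e0 ed1.
Qed.

Lemma liminf_0p_mono h k (del0 : R) : (0 < del0)%R ->
  (forall e, (0 < e < del0)%R -> h e <= k e) -> liminf_0p h <= liminf_0p k.
Proof.
move=> d0 hk; apply: ge_ereal_sup => _ [del /= del0' <-].
have m0 : (0 < Num.min del del0)%R by rewrite lt_min del0' d0.
apply: (@le_trans _ _ (ereal_inf [set k e | e in [set e | (0 < e < Num.min del del0)%R]])); last first.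
  by apply: ereal_sup_ubound; exists (Num.min del del0).
apply: le_ereal_inf_tmp => _ [e /= /andP[e0 ed] <-].
move: ed; rewrite lt_min => /andP[ed1 ed2].
apply: (le_trans _ (hk e _)); last by rewrite e0 ed2.
by apply: ereal_inf_lbound; exists e => //=; rewrite e0 ed1.
Qed.

Lemma limsup_0p_div3 h : limsup_0p (fun e : R => h (e / 3%:R)%R) <= limsup_0p h.
Proof.
apply: le_ereal_inf_tmp => _ [del /= del0 <-].
have d3 : (0 < del * 3%:R)%R by rewrite mulr_gt0.
apply: (@le_trans _ _ (ereal_sup [set h (e / 3%:R)%R | e in [set e | (0 < e < del * 3%:R)%R]])).
  by apply: ereal_inf_lbound; exists (del * 3%:R)%R.
apply: ge_ereal_sup => _ [e /= /andP[e0 ed] <-].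
apply: ereal_sup_ubound; exists (e / 3%:R)%R => //=.
by rewrite divr_gt0 //= ltr_pdivrMr.
Qed.

Lemma liminf_0p_div3 h : liminf_0p (fun e : R => h (e / 3%:R)%R) <= liminf_0p h.
Proof.
apply: ge_ereal_sup => _ [del /= del0 <-].
apply: (@le_trans _ _ (ereal_inf [set h e | e in [set e | (0 < e < del / 3%:R)%R]])); last first.
  by apply: ereal_sup_ubound; exists (del / 3%:R)%R => //=; rewrite divr_gt0.
apply: le_ereal_inf_tmp => _ [e /= /andP[e0 ed] <-].
apply: ereal_inf_lbound; exists (e * 3%:R)%R => /=.
  by rewrite mulr_gt0 //= -ltr_pdivlMr.
by rewrite mulfK.
Qed.

Lemma eta_lim (x l : \bar R) :
  (forall eta : R, (0 < eta)%R -> x <= l * (1 + eta)%:E) -> x <= l.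
Proof.
move=> H; case: l H => [l| |] H; last 2 first.
- by rewrite leey.
- by have := H 1%R ltr01; rewrite mulNyr gtr0_sg ?mul1e //; lra.
apply/lee_addgt0Pr => e e0.
have h0 : (0 < `|l| + 1)%R by rewrite ltr_wpDl.
apply: (le_trans (H (e / (`|l| + 1))%R (divr_gt0 e0 h0))).
rewrite -EFinD lee_fin mulrDr mulr1 lerD2l.
rewrite mulrA ler_pdivrMr //; have := ler_norm l; nra.
Qed.

End Gen.


Section Dyn.
Variables (R : realType) (X : Type) (d : X -> X -> R) (phi : X -> R -> X).
Hypothesis Hd : is_metric d.
Hypothesis Hfl : forall x t s, phi x (t + s)%R = phi (phi x s) t.

Lemma dflow_pt t x y u : (0 <= u <= t)%R ->
  (d (phi x u) (phi y u))%:E <= dflow d phi t x y.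
Proof.
move=> hu; apply: ereal_sup_ubound; exists u => //=.
Qed.

Lemma dflow_le t x y (b : R) :
  (forall u, (0 <= u <= t)%R -> (d (phi x u) (phi y u) <= b)%R) ->
  dflow d phi t x y <= b%:E.
Proof.
move=> H; apply: ge_ereal_sup => _ [u /= hu <-].
by rewrite lee_fin; apply: H; move: hu; rewrite in_itv.
Qed.

Lemma spanning_mono t t' e E : (t <= t')%R ->
  spanning d phi t' e E -> spanning d phi t e E.
Proof.
move=> tt' H x; have [y yE hy] := H x; exists y => //.
apply: le_lt_trans hy; apply: ereal_sup_le => _ [u /= hu <-].
exists u => //=; move: hu; rewrite !in_itv /= => /andP[-> ut].
exact: le_trans tt'.
Qed.

Lemma rt_le t e E : spanning d phi t e E -> rt d phi t e <= (length E)%:R%:E.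
Proof. by move=> H; apply: ereal_inf_lbound; exists (length E) => //; exists E. Qed.

Lemma rt_ge0 t e : 0 <= rt d phi t e.
Proof. by apply: le_ereal_inf_tmp => _ [n _ <-]; rewrite lee_fin. Qed.

Lemma rt_attained t e : rt d phi t e != +oo ->
  exists E, spanning d phi t e E /\ rt d phi t e = (length E)%:R%:E.
Proof.
move=> H.
have [[n Pn]|H'] := pselect (exists n, `[< exists E : list X, length E = n /\ spanning d phi t e E >]); last first.
  exfalso; move/eqP: H; apply; apply/ereal_inf_pinfty => _ [n Pn <-]; exfalso; apply: H'.
  by exists n; apply/asboolP.
pose P := fun k => `[< exists E : list X, length E = k /\ spanning d phi t e E >].
pose m := @ex_minn P (ex_intro _ n Pn).
have : P m by rewrite /m; case: ex_minnP.
move=> /asboolP[E [lE sE]]; exists E; split => //.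
apply/eqP; rewrite eq_le rt_le //= lE.
apply: le_ereal_inf_tmp => _ [k Pk <-]; rewrite lee_fin ler_nat.
rewrite /m; case: ex_minnP => m0 _ Hm; apply: Hm; exact/asboolP.
Qed.

Fixpoint ct (t del : R) (z : X) (l : list X) : Prop :=
  match l with
  | nil => True
  | y :: l' => (forall u, (0 <= u <= t)%R -> (d (phi z u) (phi y u) < del)%R)
               /\ ct t del (phi z t) l'
  end.

Fixpoint tuples (E : list X) (n : nat) : list (list X) :=
  match n with
  | O => nil :: nil
  | S n => flat_map (fun y => map (cons y) (tuples E n)) E
  end.

Lemma flat_map_len (A B : Type) (f : A -> list B) k (E : list A) :
  (forall y, length (f y) = k) -> length (flat_map f E) = (length E * k)%N.
Proof.
move=> H; elim: E => //= a E IH; rewrite length_app IH H.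
by rewrite mulSn.
Qed.

Lemma tuples_length E n : length (tuples E n) = (length E ^ n)%N.
Proof.
elim: n => //= n IH; rewrite (@flat_map_len _ _ _ (length E ^ n)%N).
  by rewrite expnS.
by move=> y; rewrite length_map.
Qed.

Lemma tuples_ex t del E : spanning d phi t del E ->
  forall n x, exists l, In l (tuples E n) /\ length l = n /\ ct t del x l.
Proof.
move=> sE; elim=> [|n IH] x; first by exists nil; split => //; left.
have [y yE hy] := sE x.
have [l [lin [ll cl]]] := IH (phi x t).
exists (y :: l); split; [|split; [by rewrite /= ll|]].
  by rewrite /=; apply in_flat_map; exists y; split => //; apply: in_map.
split => // u hu; rewrite -lte_fin; exact: le_lt_trans (@dflow_pt t x y u hu) hy.
Qed.

Lemma ct_dist t del l : forall x w, ct t del x l -> ct t del w l -> l <> nil ->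
  forall s, (0 <= s <= (length l)%:R * t)%R -> (d (phi x s) (phi w s) < del *+ 2)%R.
Proof.
have [dpos [dsep [dsym dtri]]] := Hd.
elim: l => [//|y l IH] x w /= [hx cx] [hw cw] _ s /andP[s0 st].
have [sle|slt] := lerP s t.
  apply: (le_lt_trans (dtri _ (phi y s) _)); rewrite (dsym (phi y s)) mulr2n.
  by apply: ltrD; [apply: hx|apply: hw]; rewrite s0 sle.
have ln0 : l <> nil.
  by move=> l0; move: st; rewrite l0 /= mul1r => /(lt_le_trans slt); rewrite ltxx.
have ex z : phi z s = phi (phi z t) (s - t) by rewrite -Hfl subrK.
rewrite !ex; apply: IH => //.
rewrite subr_ge0 (ltW slt) /= lerBlDr; move: st; rewrite -addn1 natrD mulrDl mul1r.
by [].
Qed.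

Lemma span_pow t del e E n : (del *+ 2 < e)%R -> spanning d phi t del E ->
  exists W, length W = (length E ^ n.+1)%N /\ spanning d phi (n.+1%:R * t) e W.
Proof.
move=> de sE; case: E sE => [|x0 E'] sE.
  by exists nil; split => [/=|x]; [rewrite exp0n|have [y []] := sE x].
set E := x0 :: E'.
pose rep l := epsilon (inhabits x0) (fun w => ct t del w l).
exists (map rep (tuples E n.+1)); split; first by rewrite length_map tuples_length.
move=> x; have [l [lin [ll cl]]] := @tuples_ex t del E sE n.+1 x.
have cw : ct t del (rep l) l := @epsilon_spec X (inhabits x0) (fun w => ct t del w l) (ex_intro _ x cl).
exists (rep l); first exact: in_map.
apply: (le_lt_trans (@dflow_le _ x (rep l) (del *+ 2)%R _)); last by rewrite lte_fin.
move=> u hu; apply/ltW; apply: (@ct_dist t del l x (rep l) cl cw).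
  by move=> l0; move: ll; rewrite l0.
by rewrite ll.
Qed.

End Dyn.


Lemma elog_mono (R : realType) (x y : \bar R) : 0 <= x -> x <= y -> elog x <= elog y.
Proof.
move=> x0 xy; case: x x0 xy => [x| |] x0 xy.
- case: y xy => [y| |] xy /=; last 2 first.
  + by rewrite leey.
  + by [].
  case: ifPn => [_|xn0]; first by rewrite leNye.
  have xp : (0 < x)%R by rewrite lt_def xn0 -lee_fin.
  have yp : (0 < y)%R by apply: lt_le_trans xp _; rewrite -lee_fin.
  by rewrite ifF ?lee_fin ?ler_ln ?posrE -?lee_fin //; apply/negbTE; rewrite gt_eqF.
- by move: xy; rewrite leye_eq => /eqP ->.
- by [].
Qed.

Lemma elog_nat (R : realType) (m : nat) : (0 < m)%N ->
  elog (m%:R%:E : \bar R) = (ln m%:R)%:E.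
Proof. by move=> m0 /=; rewrite pnatr_eq0 ifF // ; apply/negbTE; rewrite -lt0n. Qed.

Section Core.
Variables (R : realType) (X : Type) (d : X -> X -> R) (phi : X -> R -> X).
Hypothesis Hd : is_metric d.
Hypothesis Hfl : forall x t s, phi x (t + s)%R = phi (phi x s) t.

Let f e t := elog (rt d phi t e) * (t^-1)%:E.

Lemma bound_T e del t T E : (del *+ 2 < e)%R -> (0 < t)%R -> (t <= T)%R ->
  spanning d phi t del E ->
  f e T <= elog ((length E ^ (Num.truncn (T / t)).+1)%N%:R%:E) * (T^-1)%:E.
Proof.
move=> de t0 tT sE.
have T0 : (0 < T)%R by exact: lt_le_trans tT.
have [W [lW sW]] := @span_pow R X d phi Hd Hfl t del e E (Num.truncn (T / t)) de sE.
rewrite /f; apply: lee_wpmul2r; first by rewrite lee_fin invr_ge0 ltW.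
apply: elog_mono; first exact: rt_ge0.
rewrite -lW; apply: rt_le; apply: spanning_mono sW.
rewrite -ler_pdivrMr //; apply/ltW.
by have /andP[] := truncn_itv (divr_ge0 (ltW T0) (ltW t0)).
Qed.

Lemma core e t : (0 < e)%R -> (0 < t)%R -> rate d phi e <= f (e / 3%:R)%R t.
Proof.
move=> e0 t0; set del := (e / 3%:R)%R.
have de : (del *+ 2 < e)%R by rewrite /del mulr2n; lra.
have [hinf|hfin] := eqVneq (rt d phi t del) +oo.
  by rewrite /f hinf /= mulyr gtr0_sg ?invr_gt0 // mul1e leey.
have [E [sE hE]] := @rt_attained R X d phi t del hfin.
have supT : forall T0, (t <= T0)%R -> rate d phi e <= ereal_sup [set f e T | T in [set T | (T0 <= T)%R]].
  by move=> T0 _; apply: ereal_inf_lbound; exists T0.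
rewrite /f hE; set m := length E.
have [m0|mpos] := eqVneq m 0%N.
  apply: le_trans (supT t (lexx _)) _; apply: ge_ereal_sup => _ [T /= tT <-].
  apply: le_trans (@bound_T e del t T E de t0 tT sE) _.
  rewrite -/m m0 exp0n //= eqxx mulNyr gtr0_sg ?invr_gt0 ?mul1e ?leNye //.
  exact: lt_le_trans tT.
rewrite -lt0n in mpos.
rewrite elog_nat // -EFinM; set a := ln (m%:R : R).
have a0 : (0 <= a)%R by apply: ln_ge0; rewrite ler1n.
apply/lee_addgt0Pr => eps eps0.
set T0 := (t + a / eps)%R.
have tT0 : (t <= T0)%R by rewrite /T0 lerDl divr_ge0 // ltW.
apply: le_trans (supT T0 tT0) _; apply: ge_ereal_sup => _ [T /= T0T <-].
have tT := le_trans tT0 T0T.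
have T0' : (0 < T)%R by exact: lt_le_trans tT.
apply: le_trans (@bound_T e del t T E de t0 tT sE) _.
rewrite -/m elog_nat ?expn_gt0 ?mpos // -EFinM -EFinD lee_fin natrX lnXn ?ltr0n //.
rewrite -/a ler_pdivrMr //.
have := truncn_itv (divr_ge0 (ltW T0') (ltW t0)) => /andP[hN _].
move: hN; set N := Num.truncn (T / t); set u := (T / t)%R => hN.
have hu : (a / t * T = a * u)%R by rewrite /u mulrAC -mulrA.
have hb : (eps * (a / eps) = a)%R by rewrite mulrC divfK // gt_eqF.
move: T0T; rewrite /T0 => T0T.
rewrite mulrDl hu -mulr_natr -addn1 natrD; nra.
Qed.

End Core.


Lemma liminf_le_limsup (R : realType) (h : R -> \bar R) :
  liminf_pinfty h <= limsup_pinfty h.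
Proof.
apply: ge_ereal_sup => _ [T1 _ <-]; apply: le_ereal_inf_tmp => _ [T2 _ <-].
apply: (@le_trans _ _ (h (Num.max T1 T2))).
  by apply: ereal_inf_lbound; exists (Num.max T1 T2) => //=; rewrite le_max lexx.
by apply: ereal_sup_ubound; exists (Num.max T1 T2) => //=; rewrite le_max lexx orbT.
Qed.

Lemma G_limsup (R : realType) (h k : R -> \bar R) :
  (forall eta : R, (0 < eta)%R -> exists2 del : R, (0 < del)%R &
     forall e, (0 < e < del)%R -> k e <= h (e / 3%:R)%R * (1 + eta)%:E) ->
  limsup_0p k <= limsup_0p h.
Proof.
move=> H; apply: eta_lim => eta eta0; have [del del0 Hk] := H eta eta0.
apply: le_trans (@limsup_0p_mono _ _ _ _ del0 Hk) _.
rewrite limsup_0p_scale; last by lra.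
apply: lee_wpmul2r; first by rewrite lee_fin; lra.
exact: limsup_0p_div3.
Qed.

Lemma G_liminf (R : realType) (h k : R -> \bar R) :
  (forall eta : R, (0 < eta)%R -> exists2 del : R, (0 < del)%R &
     forall e, (0 < e < del)%R -> k e <= h (e / 3%:R)%R * (1 + eta)%:E) ->
  liminf_0p k <= liminf_0p h.
Proof.
move=> H; apply: eta_lim => eta eta0; have [del del0 Hk] := H eta eta0.
apply: le_trans (@liminf_0p_mono _ _ _ _ del0 Hk) _.
rewrite liminf_0p_scale; last by lra.
apply: lee_wpmul2r; first by rewrite lee_fin; lra.
exact: liminf_0p_div3.
Qed.

Section Final.
Variables (R : realType) (X : Type) (d : X -> X -> R) (phi : X -> R -> X).
Hypothesis Hd : is_metric d.
Hypothesis Hfl : forall x t s, phi x (t + s)%R = phi (phi x s) t.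

Let f e t := elog (rt d phi t e) * (t^-1)%:E.
Let B e := liminf_pinfty (f e).

Lemma Bsign e : B e = -oo \/ 0 <= B e.
Proof.
have [[x0 _]|nX] := pselect (exists x : X, True).
  right; apply: le_ereal_sup_tmp; exists (ereal_inf [set f e t | t in [set t | (1 <= t)%R]]).
    by exists 1%R.
  apply: le_ereal_inf_tmp => _ [t /= t1 <-].
  apply: mule_ge0; last by rewrite lee_fin invr_ge0; lra.
  have -> : 0 = elog (1%:R%:E : \bar R) by rewrite elog_nat // ln1.
  apply: elog_mono => //; apply: le_ereal_inf_tmp => _ [n [E [lE sE]] <-].
  rewrite lee_fin ler1n -lE; have [y yE _] := sE x0.
  by case: E yE {lE sE}.
left; apply/eqP; rewrite eq_le leNye andbT; apply: ge_ereal_sup => _ [T _ <-].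
apply: (@le_trans _ _ (f e (Num.max T 1%R))).
  by apply: ereal_inf_lbound; exists (Num.max T 1%R) => //=; rewrite le_max lexx.
have sp : spanning d phi (Num.max T 1%R) e nil by move=> x; exfalso; apply: nX; exists x.
have r0 : rt d phi (Num.max T 1%R) e = 0.
  by apply/eqP; rewrite eq_le rt_ge0 andbT; exact: (@rt_le _ _ _ _ _ _ _ sp).
have mpos : (0 < Num.max T 1%R)%R by rewrite lt_max ltr01 orbT.
rewrite /f r0 /= eqxx mulNyr gtr0_sg ?invr_gt0 // mul1e.
by [].
Qed.

Lemma A_le_B e : (0 < e)%R -> rate d phi e <= B (e / 3%:R)%R.
Proof.
move=> e0; apply: le_ereal_sup_tmp.
exists (ereal_inf [set f (e / 3%:R)%R t | t in [set t | (1 <= t)%R]]); first by exists 1%R.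
apply: le_ereal_inf_tmp => _ [t /= t1 <-].
by apply: (@core R X d phi Hd Hfl e t e0); lra.
Qed.

Let c (e : R) := ((ln (e^-1))^-1)%R.

Lemma Lpos (e : R) : (0 < e < 1)%R -> (0 < ln (e^-1))%R.
Proof. by case/andP=> e0 e1; apply: ln_gt0; rewrite invf_gt1. Qed.

Lemma cpos (e : R) : (0 < e < 1)%R -> (0 < c e)%R.
Proof. by move=> he; rewrite invr_gt0 Lpos. Qed.

Lemma FE (e : R) : (0 < e < 1)%R ->
  liminf_pinfty (fun t => elog (rt d phi t e) * ((t * ln (e^-1))^-1)%:E) = B e * (c e)%:E.
Proof.
move=> he; rewrite /B -liminf_pinfty_scale ?cpos //; congr liminf_pinfty.
by apply: funext => t; rewrite /f invfM EFinM muleA.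
Qed.

Lemma key (eta : R) : (0 < eta)%R -> exists2 del : R, (0 < del)%R &
  forall e, (0 < e < del)%R -> rate d phi e * (c e)%:E <=
    liminf_pinfty (fun t => elog (rt d phi t (e / 3%:R)%R) *
        ((t * ln ((e / 3%:R)%R^-1))^-1)%:E) * (1 + eta)%:E.
Proof.
move=> eta0; set z := (- ln (3%:R : R) / eta)%R.
exists (Num.min 1%R (expR z)); first by rewrite lt_min ltr01 expR_gt0.
move=> e /andP[e0]; rewrite lt_min => /andP[e1 ez].
have he : (0 < e < 1)%R by rewrite e0 e1.
have he3 : (0 < e / 3%:R < 1)%R by apply/andP; split; lra.
rewrite FE //.
have cle : (c e <= c (e / 3%:R) * (1 + eta))%R.
  rewrite /c; set L := ln e^-1.
  have L0 : (0 < L)%R by exact: Lpos.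
  have l3 : (0 <= ln (3%:R : R))%R by apply: ln_ge0; rewrite ler1n.
  have -> : ln ((e / 3%:R)^-1) = (ln (3%:R : R) + L)%R.
    by rewrite invfM invrK lnM ?posrE ?invr_gt0 ?ltr0n // addrC.
  have hz : (ln e < z)%R by rewrite -[X in (_ < X)%R]expRK ltr_ln ?posrE ?expR_gt0.
  have hL : (L = - ln e)%R by rewrite /L lnV ?posrE.
  have hez : (eta * z = - ln (3%:R : R))%R by rewrite /z mulrC divfK // gt_eqF.
  have h3 : (ln (3%:R : R) <= eta * L)%R by rewrite hL; nra.
  rewrite mulrC ler_pdivlMr; last by lra.
  rewrite mulrC ler_pdivrMr //; nra.
apply: le_trans (_ : B (e / 3%:R)%R * (c e)%:E <= _).
  by apply: lee_wpmul2r; [rewrite lee_fin ltW ?cpos | exact: A_le_B].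
rewrite -muleA -EFinM.
case: (Bsign (e / 3%:R)%R) => [->|B0].
  by rewrite !mulNyr !gtr0_sg ?mulr_gt0 ?cpos // ; lra.
by apply: lee_wpmul2l => //; rewrite lee_fin.
Qed.

End Final.
Theorem proposition2p4 (R : realType) (X : Type) (d : X -> X -> R)
  (phi : X -> R -> X) :
  is_metric d -> d_compact d -> is_flow d phi ->
  upper_mdimM d phi =
    limsup_0p (fun eps => liminf_pinfty (fun t =>
      elog (rt d phi t eps) * ((t * ln (eps^-1))^-1)%:E)) /\
  lower_mdimM d phi =
    liminf_0p (fun eps => liminf_pinfty (fun t =>
      elog (rt d phi t eps) * ((t * ln (eps^-1))^-1)%:E)).
Proof.
move=> Hd _ [_ [_ Hfl]].
split; apply/eqP; rewrite eq_le; apply/andP; split.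
- by apply: G_limsup => eta eta0; exact: (@key R X d phi Hd Hfl eta eta0).
- apply: (@limsup_0p_mono _ _ _ 1%R ltr01) => e he.
  rewrite (@FE R X d phi e he); apply: lee_wpmul2r.
    by rewrite lee_fin ltW // (@cpos R e he).
  exact: liminf_le_limsup.
- by apply: G_liminf => eta eta0; exact: (@key R X d phi Hd Hfl eta eta0).
- apply: (@liminf_0p_mono _ _ _ 1%R ltr01) => e he.
  rewrite (@FE R X d phi e he); apply: lee_wpmul2r.
    by rewrite lee_fin ltW // (@cpos R e he).
  exact: liminf_le_limsup.
Qed.
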